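(* Let $m\ge 1$, let $t_1<\cdots<t_m$ be real, and let $\omega_0,\dots,\omega_m$ be real numbers with $\sum_{k=0}^{\ell}\omega_k\ge 0$ for $\ell=0,\dots,m$ and such that $w(x)={\rm e}^{-x^2}\big(\omega_0+\sum_{k=1}^m\omega_k\theta(x-t_k)\big)$ is not identically zero. With $R_{n,k},r_{n,k}$ as in the context, the following hold: $$r_{n+1,k}=-r_{n,k}+\Big(t_k-\frac12\sum_{j=1}^mR_{n,j}\Big)R_{n,k},\qquad n\ge0,\ k=1,\dots,m,$$ and, for $n\ge1$ (whenever the denominators are nonzero), $$R_{n,1}=\frac{2r_{n,1}^2}{\Big(\sum_{k=1}^m r_{n,k}+n\Big)R_{n-1,1}},\qquad R_{n,k}=\frac{r_{n,k}^2R_{n-1,1}}{r_{n,1}^2R_{n-1,k}}R_{n,1},\quad k=2,\dots,m,$$ with initial values $$R_{0,k}=\frac{\omega_k{\rm e}^{-t_k^2}}{\int_{-\infty}^{+\infty}{\rm e}^{-x^2}\big(\omega_0+\sum_{j=1}^m\omega_j\theta(x-t_j)\big)dx},\qquad r_{0,k}=0.$$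
   Context: $\theta(y)=1$ for $y>0$ and $0$ otherwise. $P_n$ ($n\ge0$) is the monic degree-$n$ polynomial orthogonal with respect to $w$ on $\mathbb{R}$, $\int P_jP_kw\,dx=h_k\delta_{jk}$, $h_k>0$. For $k=1,\dots,m$: $R_{n,k}:=\omega_k{\rm e}^{-t_k^2}P_n(t_k)^2/h_n$ for $n\ge0$; $r_{n,k}:=\omega_k{\rm e}^{-t_k^2}P_n(t_k)P_{n-1}(t_k)/h_{n-1}$ for $n\ge1$, and $r_{0,k}:=0$. *)

(* Defs.v *)
From Stdlib Require Import Reals.
From Coquelicot Require Import Coquelicot.
Open Scope R_scope.

Definition theta (y : R) : R := if Rlt_dec 0 y then 1 else 0.

Fixpoint sum1 (f : nat -> R) (m : nat) : R :=
  match m with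
  | O => 0
  | S m' => sum1 f m' + f (S m')
  end.

Definition sum0 (f : nat -> R) (l : nat) : R := f O + sum1 f l.

Definition weight (m : nat) (om t : nat -> R) (x : R) : R :=
  exp (- x ^ 2) * (om O + sum1 (fun k => om k * theta (x - t k)) m).

Fixpoint psum (c : nat -> R) (n : nat) (x : R) : R :=
  match n with
  | O => 0
  | S n' => psum c n' x + c n' * x ^ n'
  end.

Definition Pmon (c : nat -> nat -> R) (n : nat) (x : R) : R :=
  x ^ n + psum (c n) n x.

Definition Rnk (om t : nat -> R) (c : nat -> nat -> R) (h : nat -> R)
  (n k : nat) : R :=
  om k * exp (- (t k) ^ 2) * (Pmon c n (t k)) ^ 2 / h n.

Definition rnk (om t : nat -> R) (c : nat -> nat -> R) (h : nat -> R)
  (n k : nat) : R :=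
  match n with
  | O => 0
  | S n' => om k * exp (- (t k) ^ 2) * Pmon c n (t k) * Pmon c n' (t k) / h n'
  end.

(* Main.v *)
Require Import Defs.
From Stdlib Require Import Reals.
From Coquelicot Require Import Coquelicot.
From Stdlib Require Import Lra Lia Psatz FunctionalExtensionality.
Open Scope R_scope.

Definition cc (c : nat -> nat -> R) (n i : nat) : R :=
  if Nat.ltb i n then c n i else if Nat.eqb i n then 1 else 0.
Definition shiftc (a : nat -> R) (i : nat) : R :=
  match i with O => 0 | S j => a j end.
Definition da (a : nat -> R) (i : nat) : R := INR (S i) * a (S i).

Lemma psum_ext a b N x : (forall i, (i < N)%nat -> a i = b i) -> psum a N x = psum b N x.
Proof.
  induction N; simpl; intros H; [reflexivity|].
  rewrite IHN by (intros; apply H; lia). rewrite H by lia. reflexivity.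
Qed.

Lemma psum_lin a b u v N x :
  psum (fun i => u * a i + v * b i) N x = u * psum a N x + v * psum b N x.
Proof. induction N; simpl; [ring|]. rewrite IHN. ring. Qed.

Lemma psum_top a N K x : (forall i, (N <= i)%nat -> a i = 0) -> (N <= K)%nat ->
  psum a K x = psum a N x.
Proof.
  intros H HK. induction HK; [reflexivity|]. simpl. rewrite IHHK, (H m) by lia. ring.
Qed.

Lemma Pmon_cc c n N x : (S n <= N)%nat -> psum (cc c n) N x = Pmon c n x.
Proof.
  intros HN. rewrite (psum_top _ (S n)).
  - unfold Pmon. simpl. unfold cc at 2. rewrite Nat.ltb_irrefl, Nat.eqb_refl.
    rewrite (psum_ext _ (c n)). ring.
    intros i Hi. unfold cc. apply Nat.ltb_lt in Hi. now rewrite Hi.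
  - intros i Hi. unfold cc. destruct (Nat.ltb_spec i n); [lia|].
    destruct (Nat.eqb_spec i n); [lia|reflexivity].
  - exact HN.
Qed.

Lemma psum_shift a N x : psum (shiftc a) (S N) x = x * psum a N x.
Proof. induction N; simpl in *; [ring|]. rewrite IHN. ring. Qed.

Lemma psum_derive a N x : is_derive (fun y => psum a N y) x (psum (da a) (pred N) x).
Proof.
  induction N.
  - simpl. auto_derive; auto.
  - simpl.
    assert (Hm : is_derive (fun y => a N * y ^ N) x (a N * (INR N * x ^ (pred N)))).
    { auto_derive; auto. ring. }
    replace (psum (da a) N x) with (psum (da a) (pred N) x + a N * (INR N * x ^ pred N)).
    + apply (is_derive_plus (fun y => psum a N y) (fun y => a N * y ^ N)); assumption.
    + destruct N; [simpl; ring|]. cbn [pred psum]. unfold da. ring.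
Qed.

Lemma psum_bound a N : exists C, 0 <= C /\ forall x, Rabs (psum a N x) <= C * (1 + x^2)^N.
Proof.
  induction N.
  - exists 0. split; [lra|]. intros x. simpl. rewrite Rabs_R0. lra.
  - destruct IHN as [C [HC H]]. exists (C + Rabs (a N)). split.
    { pose proof (Rabs_pos (a N)). lra. }
    intros x. simpl psum.
    assert (H1 : 1 <= 1 + x^2) by nra.
    assert (H2 : (1 + x^2)^N <= (1 + x^2)^(S N)) by (apply Rle_pow; [lra|lia]).
    assert (H3 : Rabs x ^ N <= (1 + x^2)^N).
    { apply pow_incr. split; [apply Rabs_pos|]. destruct (Rle_dec 0 x).
      rewrite Rabs_right by lra. nra. rewrite Rabs_left by lra. nra. }
    eapply Rle_trans; [apply Rabs_triang|]. rewrite Rabs_mult, <- RPow_abs.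
    specialize (H x). pose proof (Rabs_pos (a N)).
    assert (0 <= (1+x^2)^N) by (apply pow_le; lra).
    nra.
Qed.

Lemma exp_mult_nat n z : exp (INR n * z) = exp z ^ n.
Proof.
  induction n. simpl. rewrite Rmult_0_l, exp_0. reflexivity.
  rewrite S_INR, Rmult_plus_distr_r, Rmult_1_l, exp_plus, IHn. simpl. ring.
Qed.

Lemma exp_ge_pow y n : 0 <= y -> (0 < n)%nat -> (y / INR n) ^ n <= exp y.
Proof.
  intros Hy Hn. assert (Hn' : 0 < INR n) by (apply lt_0_INR; lia).
  replace y with (INR n * (y / INR n)) at 2 by (field; lra).
  rewrite exp_mult_nat. apply pow_incr. split.
  apply Rdiv_le_0_compat; lra. pose proof (exp_ineq1_le (y / INR n)). lra.
Qed.

Lemma decay Q C K : 0 <= C -> (forall x, Rabs (Q x) <= C * (1 + x^2)^K) ->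
  forall eps, 0 < eps -> exists M, forall x, M < Rabs x -> Rabs (Q x * exp (- x^2)) < eps.
Proof.
  intros HC HQ eps Heps.
  set (n := S K). set (D := C * exp 1 * INR n ^ n).
  assert (HD : 0 <= D).
  { unfold D. apply Rmult_le_pos. apply Rmult_le_pos; [lra| left; apply exp_pos].
    apply pow_le. apply pos_INR. }
  exists (D / eps). intros x Hx.
  set (y := 1 + x^2).
  assert (Hyx : Rabs x < y).
  { unfold y. destruct (Rle_dec 0 x). rewrite Rabs_right by lra. nra. rewrite Rabs_left by lra. nra. }
  assert (Hy1 : 1 <= y) by (unfold y; nra).
  assert (HMy : D / eps < y) by lra.
  assert (HDy : D < eps * y).
  { apply (Rmult_lt_compat_l eps) in HMy; [|lra]. unfold Rdiv in HMy.
    replace (eps * (D * / eps)) with D in HMy by (field; lra). lra. }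
  assert (Hexp : exp (- x^2) = exp 1 / exp y).
  { unfold y. replace (- x^2) with (1 - (1 + x^2)) by ring. unfold Rminus. rewrite exp_plus, exp_Ropp. reflexivity. }
  assert (Hn : (0 < n)%nat) by (unfold n; lia).
  assert (HnR : 0 < INR n) by (apply lt_0_INR; lia).
  pose proof (exp_ge_pow y n ltac:(lra) Hn) as Hge.
  assert (Hyn : (y / INR n) ^ n = y ^ n / INR n ^ n).
  { unfold Rdiv. rewrite Rpow_mult_distr, pow_inv. reflexivity. }
  rewrite Hyn in Hge.
  assert (Hyp : 0 < y ^ n) by (apply pow_lt; lra).
  assert (Hnp : 0 < INR n ^ n) by (apply pow_lt; lra).
  assert (Hey : 0 < exp y) by apply exp_pos.
  rewrite Rabs_mult, (Rabs_right (exp _)) by (left; apply exp_pos).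
  rewrite Hexp.
  assert (HyK : y ^ n = y * y ^ K) by (unfold n; reflexivity).
  assert (HyKp : 0 < y ^ K) by (apply pow_lt; lra).
  specialize (HQ x). fold y in HQ.
  (* |Q| * e / exp y <= C y^K e n^n / y^n = D / y < eps *)
  assert (Hb : Rabs (Q x) * (exp 1 / exp y) <= D / y).
  { unfold D. apply Rle_trans with (C * y ^ K * (exp 1 / exp y)).
    apply Rmult_le_compat_r; [left; apply Rdiv_lt_0_compat; [apply exp_pos|lra] | exact HQ].
    assert (Hinv : / exp y <= INR n ^ n / y ^ n).
    { replace (INR n ^ n / y ^ n) with (/ (y ^ n / INR n ^ n)) by (field; lra).
      apply Rinv_le_contravar; [apply Rdiv_lt_0_compat; lra| exact Hge]. }
    apply Rle_trans with (C * y ^ K * exp 1 * (INR n ^ n / y ^ n)).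
    { replace (C * y ^ K * (exp 1 / exp y)) with (C * y ^ K * exp 1 * / exp y) by (unfold Rdiv; ring).
      apply Rmult_le_compat_l; [|exact Hinv].
      apply Rmult_le_pos; [apply Rmult_le_pos; lra| left; apply exp_pos]. }
    rewrite HyK. right. field. lra. }
  apply Rle_lt_trans with (D / y); [exact Hb|].
  apply Rmult_lt_reg_r with y; [lra|]. unfold Rdiv. rewrite Rmult_assoc, Rinv_l by lra. lra.
Qed.

Lemma RIg_scal {Fa Fb : (R -> Prop) -> Prop} {FFa : Filter Fa} {FFb : Filter Fb} (f : R -> R) k (l : R) :
  is_RInt_gen f Fa Fb l -> is_RInt_gen (fun x => k * f x) Fa Fb (k * l).
Proof. intros H. exact (is_RInt_gen_scal f k l H). Qed.

Lemma RIg_plus {Fa Fb : (R -> Prop) -> Prop} {FFa : Filter Fa} {FFb : Filter Fb} (f g : R -> R) (l1 l2 : R) :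
  is_RInt_gen f Fa Fb l1 -> is_RInt_gen g Fa Fb l2 ->
  is_RInt_gen (fun x => f x + g x) Fa Fb (l1 + l2).
Proof. intros H1 H2. exact (is_RInt_gen_plus f g l1 l2 H1 H2). Qed.

Lemma RIg_ext {Fa Fb : (R -> Prop) -> Prop} {FFa : Filter Fa} {FFb : Filter Fb} (f g : R -> R) (l : R) :
  (forall x, f x = g x) -> is_RInt_gen f Fa Fb l -> is_RInt_gen g Fa Fb l.
Proof. intros H1 H2. apply (is_RInt_gen_ext f); [|exact H2].
  apply filter_forall. intros; apply H1. Qed.

Lemma RIg_der {Fa Fb : (R -> Prop) -> Prop} {FFa : Filter Fa} {FFb : Filter Fb} (F F' : R -> R) (la lb : R) :
  (forall x, is_derive F x (F' x)) -> (forall x, continuous F' x) ->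
  filterlim F Fa (locally la) -> filterlim F Fb (locally lb) ->
  is_RInt_gen F' Fa Fb (lb - la).
Proof.
  intros HD HC Ha Hb.
  assert (E : Derive F = F').
  { apply functional_extensionality. intros x. apply is_derive_unique, HD. }
  rewrite <- E. apply is_RInt_gen_Derive; try assumption.
  - apply filter_forall. intros ab x _. eexists; apply HD.
  - apply filter_forall. intros ab x _. rewrite E. apply HC.
Qed.

Lemma lim_at_point (F : R -> R) t : filterlim F (at_point t) (locally (F t)).
Proof. intros P HP. unfold filtermap, at_point. apply locally_singleton. exact HP. Qed.

Notation Fm := (Rbar_locally m_infty).
Notation Fp := (Rbar_locally p_infty).

Lemma theta_int F F' t :
  (forall x, is_derive F x (F' x)) -> (forall x, continuous F' x) ->
  filterlim F Fm (locally 0) -> filterlim F Fp (locally 0) ->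
  is_RInt_gen (fun x => theta (x - t) * F' x) Fm Fp (- F t).
Proof.
  intros HD HC Hm Hp.
  replace (- F t) with (plus 0 (0 - F t)) by (unfold plus; simpl; ring).
  apply (is_RInt_gen_Chasles (V:=R_NormedModule) _ t).
  - pose proof (RIg_der (Fa := Fm) (Fb := at_point t) F F' 0 (F t) HD HC Hm (lim_at_point F t)) as H.
    apply (RIg_scal _ 0) in H. rewrite Rmult_0_l in H.
    apply (is_RInt_gen_ext (fun x => 0 * F' x)); [|exact H].
    exists (fun a => a < t) (fun b => b = t).
    + exists t. tauto.
    + reflexivity.
    + intros a b Ha Hb x Hx. simpl in Hx |- *. subst b.
      rewrite Rmax_right in Hx by lra. unfold theta.
      destruct (Rlt_dec 0 (x - t)); [lra|]. ring.
  - pose proof (RIg_der (Fa := at_point t) (Fb := Fp) F F' (F t) 0 HD HC (lim_at_point F t) Hp) as H.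
    apply (is_RInt_gen_ext F'); [|exact H].
    exists (fun a => a = t) (fun b => t < b).
    + reflexivity.
    + exists t. tauto.
    + intros a b Ha Hb x Hx. simpl in Hx |- *. subst a.
      rewrite Rmin_left in Hx by lra. unfold theta.
      destruct (Rlt_dec 0 (x - t)); [|lra]. symmetry; apply Rmult_1_l.
Qed.

Lemma ibp_sum m om t (F F' : R -> R) :
  (forall x, is_derive F x (F' x)) -> (forall x, continuous F' x) ->
  filterlim F Fm (locally 0) -> filterlim F Fp (locally 0) ->
  is_RInt_gen (fun x => F' x * (om O + sum1 (fun k => om k * theta (x - t k)) m)) Fm Fp
    (- sum1 (fun k => om k * F (t k)) m).
Proof.
  intros HD HC Hm Hp.
  pose proof (RIg_der (Fa := Fm) (Fb := Fp) F F' 0 0 HD HC Hm Hp) as H0.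
  induction m.
  - simpl. apply (RIg_scal _ (om O)) in H0.
    eapply RIg_ext; [|replace (-0) with (om O * (0 - 0)) by ring; exact H0].
    intros x; simpl; ring.
  - simpl. eapply RIg_ext; [|replace (- (sum1 (fun k => om k * F (t k)) m + om (S m) * F (t (S m))))
      with (- sum1 (fun k => om k * F (t k)) m + om (S m) * (- F (t (S m)))) by ring;
      apply (RIg_plus _ _ _ _ IHm (RIg_scal _ (om (S m)) _ (theta_int F F' (t (S m)) HD HC Hm Hp)))].
    intros x. simpl. ring.
Qed.

Lemma cont_R (f g : R -> R) x : continuous f x -> continuous g x -> continuous (fun y => f y * g y) x.
Proof. intros Hf Hg. exact (continuous_mult f g x Hf Hg). Qed.
Lemma cont_Rplus (f g : R -> R) x : continuous f x -> continuous g x -> continuous (fun y => f y + g y) x.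
Proof. intros Hf Hg. exact (continuous_plus f g x Hf Hg). Qed.
Lemma cont_Ropp (f : R -> R) x : continuous f x -> continuous (fun y => - f y) x.
Proof. intros Hf. exact (continuous_opp f x Hf). Qed.

Lemma cont_const (c : R) x : continuous (fun _ : R => c) x.
Proof. apply (continuous_const (U:=R_UniformSpace) (V:=R_UniformSpace)). Qed.
Lemma cont_id x : continuous (fun y : R => y) x.
Proof. apply (continuous_id (U:=R_UniformSpace)). Qed.

Lemma lim_decay (Q : R -> R) C K : 0 <= C -> (forall x, Rabs (Q x) <= C * (1 + x^2)^K) ->
  filterlim (fun x => Q x * exp (- x^2)) Fm (locally 0) /\
  filterlim (fun x => Q x * exp (- x^2)) Fp (locally 0).
Proof.
  intros HC HQ. split; apply filterlim_locally; intros eps;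
    destruct (decay Q C K HC HQ eps (cond_pos eps)) as [M HM].
  - exists (- Rabs M). intros x Hx. change (Rabs (Q x * exp (- x^2) - 0) < eps).
    rewrite Rminus_0_r. apply HM. pose proof (Rle_abs M). rewrite Rabs_left by (pose proof (Rabs_pos M); lra). lra.
  - exists (Rabs M). intros x Hx. change (Rabs (Q x * exp (- x^2) - 0) < eps).
    rewrite Rminus_0_r. apply HM. pose proof (Rle_abs M). rewrite Rabs_right by (pose proof (Rabs_pos M); lra). lra.
Qed.

Lemma ibp m om t (Q dQ : R -> R) C K :
  (forall x, is_derive Q x (dQ x)) -> (forall x, continuous dQ x) ->
  0 <= C -> (forall x, Rabs (Q x) <= C * (1 + x^2)^K) ->
  is_RInt_gen (fun x => (dQ x - 2 * x * Q x) * weight m om t x) Fm Fp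
    (- sum1 (fun k => om k * (Q (t k) * exp (- (t k)^2))) m).
Proof.
  intros HD HCd HC HQ.
  destruct (lim_decay Q C K HC HQ) as [Hm Hp].
  assert (HF : forall x, is_derive (fun y => Q y * exp (- y^2)) x ((dQ x - 2 * x * Q x) * exp (- x^2))).
  { intros x. 
    assert (He : is_derive (fun y => exp (- y^2)) x (- (2 * x) * exp (- x^2))).
    { auto_derive; auto. change ((- (1 * ((1 + 1) * (x * 1))) * exp (- (x * (x * 1)))) = - (2 * x) * exp (- x ^ 2) :> R). simpl. ring. }
    pose proof (is_derive_mult Q (fun y => exp (- y^2)) x _ _ (HD x) He ltac:(intros; apply Rmult_comm)) as H.
    replace ((dQ x - 2 * x * Q x) * exp (- x^2)) with
      (plus (mult (dQ x) (exp (- x^2))) (mult (Q x) (- (2 * x) * exp (- x^2)))).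
    exact H. unfold plus, mult; simpl. ring. }
  assert (HCF : forall x, continuous (fun y => (dQ y - 2 * y * Q y) * exp (- y^2)) x).
  { intros x. apply cont_R.
    - apply cont_Rplus; [apply HCd|]. apply cont_Ropp. apply cont_R.
      apply cont_R; [apply cont_const|apply cont_id].
      apply (ex_derive_continuous (K:=R_AbsRing) (V:=R_NormedModule)). eexists; apply HD.
    - apply (ex_derive_continuous (K:=R_AbsRing) (V:=R_NormedModule)). auto_derive; auto. }
  pose proof (ibp_sum m om t _ _ HF HCF Hm Hp) as H.
  eapply RIg_ext; [|exact H]. intros x. unfold weight. ring.
Qed.

Definition Int m om t (f : R -> R) v :=
  is_RInt_gen (fun x => f x * weight m om t x) Fm Fp v.

Definition HOrth m om t (c : nat -> nat -> R) (h : nat -> R) := forall j k : nat,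
     is_RInt_gen (fun x => Pmon c j x * Pmon c k x * weight m om t x)
       (Rbar_locally m_infty) (Rbar_locally p_infty)
       (if Nat.eqb j k then h k else 0).

Lemma Int_ext m om t f g v : (forall x, f x = g x) -> Int m om t f v -> Int m om t g v.
Proof. intros H. unfold Int. apply RIg_ext. intros x; rewrite H; reflexivity. Qed.

Lemma Int_plus m om t f g u v : Int m om t f u -> Int m om t g v ->
  Int m om t (fun x => f x + g x) (u + v).
Proof. intros H1 H2. unfold Int. eapply RIg_ext; [|exact (RIg_plus _ _ _ _ H1 H2)].
  intros x; simpl; ring. Qed.

Lemma Int_scal m om t f k u : Int m om t f u -> Int m om t (fun x => k * f x) (k * u).
Proof. intros H1. unfold Int. eapply RIg_ext; [|exact (RIg_scal _ k _ H1)].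
  intros x; simpl; ring. Qed.

Lemma Int_sub m om t f g (u v : R) : Int m om t f u -> Int m om t g v ->
  Int m om t (fun x => f x - g x) (u - v).
Proof. intros H1 H2. apply (Int_scal _ _ _ _ (-1)) in H2.
  replace (u - v) with (u + -1 * v) by ring.
  eapply Int_ext; [|exact (Int_plus _ _ _ _ _ _ _ H1 H2)]. intros x; simpl; ring.
  Qed.

Lemma Int_unique m om t f u v : Int m om t f u -> Int m om t f v -> u = v.
Proof.
  intros H1 H2. unfold Int in *.
  pose proof (is_RInt_gen_unique (V:=R_CompleteNormedModule) (Fa:=Fm) (Fb:=Fp) _ _ H1) as E1.
  pose proof (is_RInt_gen_unique (V:=R_CompleteNormedModule) (Fa:=Fm) (Fb:=Fp) _ _ H2) as E2.
  rewrite <- E1, <- E2. reflexivity.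
Qed.

Lemma psum_sub a b N x : psum (fun i => a i - b i) N x = psum a N x - psum b N x.
Proof. induction N; simpl; [ring|]. rewrite IHN. ring. Qed.
Lemma psum_scal a k N x : psum (fun i => k * a i) N x = k * psum a N x.
Proof. induction N; simpl; [ring|]. rewrite IHN. ring. Qed.

Lemma psum_decomp c a N x :
  psum a (S N) x = a N * Pmon c N x + psum (fun i => a i - a N * c N i) N x.
Proof. rewrite psum_sub, psum_scal. unfold Pmon. simpl. ring. Qed.

Lemma Lorth m om t c h (HO : HOrth m om t c h) : forall N a n, exists v : R,
  Int m om t (fun x => psum a N x * Pmon c n x) v /\
  ((N <= n)%nat -> v = 0) /\ (N = S n -> v = a n * h n).
Proof.
  induction N; intros a n.
  - exists 0. split; [|split; [auto|intros; lia]].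
    pose proof (Int_scal m om t _ 0 _ (HO 0%nat n)) as H.
    rewrite Rmult_0_l in H. eapply Int_ext; [|exact H]. intros x; simpl; ring.
  - destruct (IHN (fun i => a i - a N * c N i) n) as [v [Hv [Hv1 Hv2]]].
    pose proof (Int_scal m om t _ (a N) _ (HO N n)) as H.
    exists (a N * (if Nat.eqb N n then h n else 0) + v). split; [|split].
    + eapply Int_ext; [|exact (Int_plus _ _ _ _ _ _ _ H Hv)].
      intros x. cbv beta. rewrite (psum_decomp c a N x). ring.
    + intros Hn. destruct (Nat.eqb_spec N n); [lia|]. rewrite Hv1 by lia. ring.
    + intros Hn. injection Hn as Hn. subst N. rewrite Nat.eqb_refl, Hv1 by lia. ring.
Qed.

Lemma vanish m om t c h (HO : HOrth m om t c h) (Hh : forall n, 0 < h n) : forall N a,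
  (forall j, (j < N)%nat -> Int m om t (fun x => psum a N x * Pmon c j x) 0) ->
  forall x, psum a N x = 0.
Proof.
  induction N; intros a H x; [reflexivity|].
  destruct (Lorth m om t c h HO (S N) a N) as [v [Hv [_ Hv2]]].
  rewrite Hv2 in Hv by reflexivity.
  pose proof (Int_unique _ _ _ _ _ _ Hv (H N ltac:(lia))) as E.
  assert (HaN : a N = 0).
  { specialize (Hh N). apply Rmult_integral in E. destruct E; [assumption|lra]. }
  assert (Ea : forall y, psum a (S N) y = psum a N y).
  { intros y. simpl. rewrite HaN. ring. }
  rewrite Ea. apply IHN. intros j Hj. eapply Int_ext; [|apply (H j); lia].
  intros y. cbv beta. rewrite Ea. reflexivity.
Qed.

Lemma cc_gt c n i : (n < i)%nat -> cc c n i = 0.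
Proof. intros H. unfold cc. destruct (Nat.ltb_spec i n); [lia|]. destruct (Nat.eqb_spec i n); [lia|reflexivity]. Qed.
Lemma cc_eq c n : cc c n n = 1.
Proof. unfold cc. rewrite Nat.ltb_irrefl, Nat.eqb_refl. reflexivity. Qed.

Lemma derP c n x : is_derive (Pmon c n) x (psum (da (cc c n)) n x).
Proof.
  eapply is_derive_ext; [|exact (psum_derive (cc c n) (S n) x)].
  intros y. apply Pmon_cc. lia.
Qed.

Lemma boundP c n : exists C, 0 <= C /\ forall x, Rabs (Pmon c n x) <= C * (1 + x^2)^(S n).
Proof.
  destruct (psum_bound (cc c n) (S n)) as [C [HC H]]. exists C. split; [exact HC|].
  intros x. rewrite <- (Pmon_cc c n (S n)) by lia. apply H.
Qed.

Lemma contpsum a N x : continuous (psum a N) x.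
Proof. apply (ex_derive_continuous (K:=R_AbsRing) (V:=R_NormedModule)). eexists. apply psum_derive. Qed.
Lemma contP c n x : continuous (Pmon c n) x.
Proof. apply (ex_derive_continuous (K:=R_AbsRing) (V:=R_NormedModule)). eexists. apply derP. Qed.

Lemma ibpP m om t c p q :
  Int m om t (fun x => (psum (da (cc c p)) p x * Pmon c q x + Pmon c p x * psum (da (cc c q)) q x)
                        - 2 * x * (Pmon c p x * Pmon c q x))
    (- sum1 (fun k => om k * ((Pmon c p (t k) * Pmon c q (t k)) * exp (- (t k)^2))) m).
Proof.
  destruct (boundP c p) as [C1 [HC1 H1]]. destruct (boundP c q) as [C2 [HC2 H2]].
  unfold Int.
  apply (ibp m om t (fun x => Pmon c p x * Pmon c q x) _ (C1 * C2) (S p + S q)).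
  - intros x. pose proof (is_derive_mult (Pmon c p) (Pmon c q) x _ _ (derP c p x) (derP c q x) ltac:(intros; apply Rmult_comm)) as H.
    replace (psum (da (cc c p)) p x * Pmon c q x + Pmon c p x * psum (da (cc c q)) q x)
      with (plus (mult (psum (da (cc c p)) p x) (Pmon c q x)) (mult (Pmon c p x) (psum (da (cc c q)) q x))).
    exact H. reflexivity.
  - intros x. apply cont_Rplus; apply cont_R; (apply contpsum || apply contP).
  - apply Rmult_le_pos; assumption.
  - intros x. rewrite Rabs_mult, pow_add.
    specialize (H1 x). specialize (H2 x).
    replace (C1 * C2 * ((1 + x ^ 2) ^ S p * (1 + x ^ 2) ^ S q)) with
      ((C1 * (1 + x ^ 2) ^ S p) * (C2 * (1 + x ^ 2) ^ S q)) by ring.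
    apply Rmult_le_compat; try apply Rabs_pos; assumption.
Qed.


Lemma Int_val m om t f (u v : R) : Int m om t f u -> u = v -> Int m om t f v.
Proof. intros H E; subst; exact H. Qed.

Lemma O1 m om t c h (HO : HOrth m om t c h) p l : (p <= l)%nat ->
  Int m om t (fun x => psum (da (cc c p)) p x * Pmon c l x) 0.
Proof.
  intros Hl. destruct (Lorth m om t c h HO p (da (cc c p)) l) as [v [Hv [Hv1 _]]].
  rewrite Hv1 in Hv by exact Hl. exact Hv.
Qed.

Lemma O2 m om t c h (HO : HOrth m om t c h) p :
  Int m om t (fun x => psum (da (cc c (S p))) (S p) x * Pmon c p x) (INR (S p) * h p).
Proof.
  destruct (Lorth m om t c h HO (S p) (da (cc c (S p))) p) as [v [Hv [_ Hv2]]].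
  rewrite Hv2 in Hv by reflexivity. unfold da in Hv. rewrite cc_eq, Rmult_1_r in Hv. exact Hv.
Qed.

Lemma XP m om t c h (HO : HOrth m om t c h) j n : exists v : R,
  Int m om t (fun x => x * Pmon c j x * Pmon c n x) v /\
  ((S (S j) <= n)%nat -> v = 0) /\ (S j = n -> v = h n).
Proof.
  destruct (Lorth m om t c h HO (S (S j)) (shiftc (cc c j)) n) as [v [Hv [Hv1 Hv2]]].
  exists v. split; [|split; [exact Hv1|]].
  - eapply Int_ext; [|exact Hv]. intros x. cbv beta. rewrite psum_shift, Pmon_cc by lia. ring.
  - intros E. rewrite Hv2 by (rewrite E; reflexivity). subst n. simpl. rewrite cc_eq. ring.
Qed.

Lemma HOi m om t c h (HO : HOrth m om t c h) j k :
  Int m om t (fun x => Pmon c j x * Pmon c k x) (if Nat.eqb j k then h k else 0).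
Proof. exact (HO j k). Qed.

Lemma rec0 m om t c h (HO : HOrth m om t c h) (Hh : forall n, 0 < h n) A :
  Int m om t (fun x => x * Pmon c 0 x * Pmon c 0 x) A ->
  forall x, Pmon c 1 x = (x - A / h 0%nat) * Pmon c 0 x.
Proof.
  intros HA. set (al := A / h 0%nat).
  set (g := fun i => shiftc (cc c 0) i - cc c 1 i - al * cc c 0 i).
  assert (Eg : forall x, psum g 1 x = x * Pmon c 0 x - Pmon c 1 x - al * Pmon c 0 x).
  { intros x.
    assert (Hz : forall i, (1 <= i)%nat -> g i = 0).
    { intros i Hi; unfold g. destruct i; [lia|]. destruct i; simpl.
      - rewrite cc_eq, cc_eq, cc_gt by lia; ring.
      - rewrite !cc_gt by lia; ring. }
    rewrite <- (psum_top g 1 2 x Hz) by lia.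
    unfold g. rewrite psum_sub, psum_sub, psum_scal, psum_shift, !Pmon_cc by lia. ring. }
  assert (Hv := vanish m om t c h HO Hh 1 g).
  intros x. assert (E := Eg x). rewrite Hv in E. lra.
  intros j Hj. assert (j = 0%nat) by lia. subst j.
  pose proof (Int_sub _ _ _ _ _ _ _ (Int_sub _ _ _ _ _ _ _ HA (HOi m om t c h HO 1 0))
                (Int_scal _ _ _ _ al _ (HOi m om t c h HO 0 0))) as H.
  eapply Int_ext; [|eapply Int_val; [exact H|]].
  - intros y. cbv beta. rewrite Eg. ring.
  - simpl. unfold al. field. specialize (Hh 0%nat). lra.
Qed.

Lemma recS m om t c h (HO : HOrth m om t c h) (Hh : forall n, 0 < h n) p A :
  Int m om t (fun x => x * Pmon c (S p) x * Pmon c (S p) x) A ->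
  forall x, Pmon c (S (S p)) x = (x - A / h (S p)) * Pmon c (S p) x - h (S p) / h p * Pmon c p x.
Proof.
  intros HA. set (al := A / h (S p)). set (be := h (S p) / h p).
  set (g := fun i => shiftc (cc c (S p)) i - cc c (S (S p)) i - al * cc c (S p) i - be * cc c p i).
  assert (Eg : forall x, psum g (S (S p)) x =
     x * Pmon c (S p) x - Pmon c (S (S p)) x - al * Pmon c (S p) x - be * Pmon c p x).
  { intros x.
    assert (Hz : forall i, (S (S p) <= i)%nat -> g i = 0).
    { intros i Hi; unfold g. destruct i; [lia|]. simpl.
      destruct (Nat.eq_dec i (S p)).
      - subst i. rewrite cc_eq, cc_eq, !cc_gt by lia; ring.
      - rewrite !cc_gt by lia; ring. }
    rewrite <- (psum_top g (S (S p)) (S (S (S p))) x Hz) by lia.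
    unfold g. rewrite !psum_sub, !psum_scal, psum_shift, !Pmon_cc by lia. ring. }
  assert (Hv := vanish m om t c h HO Hh (S (S p)) g).
  intros x. assert (E := Eg x). rewrite Hv in E. lra.
  intros j Hj.
  assert (HX : exists vx : R, Int m om t (fun x => x * Pmon c (S p) x * Pmon c j x) vx /\
     (j = S p -> vx = A) /\ (j = p -> vx = h (S p)) /\ ((j < p)%nat -> vx = 0)).
  { destruct (Nat.eq_dec j (S p)).
    - subst j. exists A. split; [exact HA|]. split; [auto|]. split; intros; lia.
    - destruct (XP m om t c h HO j (S p)) as [v [Hv0 [Hv1 Hv2]]].
      exists v. split; [eapply Int_ext; [|exact Hv0]; intros y; cbv beta; ring|].
      split; [intros; lia|]. split.
      + intros ->. apply Hv2. reflexivity.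
      + intros Hjp. apply Hv1. lia. }
  destruct HX as [vx [HX [HX1 [HX2 HX3]]]].
  pose proof (Int_sub _ _ _ _ _ _ _
               (Int_sub _ _ _ _ _ _ _
                 (Int_sub _ _ _ _ _ _ _ HX (HOi m om t c h HO (S (S p)) j))
                 (Int_scal _ _ _ _ al _ (HOi m om t c h HO (S p) j)))
               (Int_scal _ _ _ _ be _ (HOi m om t c h HO p j))) as H.
  eapply Int_ext; [|eapply Int_val; [exact H|]].
  - intros y. cbv beta. rewrite Eg. ring.
  - assert (Hsp := Hh (S p)). assert (Hp := Hh p).
    destruct (Nat.eqb_spec (S (S p)) j); [lia|].
    destruct (Nat.eq_dec j (S p)).
    + subst j. rewrite HX1 by reflexivity. rewrite Nat.eqb_refl.
      destruct (Nat.eqb_spec p (S p)); [lia|]. unfold al. field. lra.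
    + destruct (Nat.eq_dec j p).
      * subst j. rewrite HX2 by reflexivity. rewrite Nat.eqb_refl.
        destruct (Nat.eqb_spec (S p) p); [lia|]. unfold be. field. lra.
      * rewrite HX3 by lia.
        destruct (Nat.eqb_spec (S p) j); [lia|]. destruct (Nat.eqb_spec p j); [lia|]. ring.
Qed.

Lemma alpha m om t c h (HO : HOrth m om t c h) n : exists A : R,
  Int m om t (fun x => x * Pmon c n x * Pmon c n x) A /\
  2 * A = sum1 (fun k => om k * ((Pmon c n (t k) * Pmon c n (t k)) * exp (- (t k)^2))) m.
Proof.
  destruct (XP m om t c h HO n n) as [A [HA _]]. exists A. split; [exact HA|].
  pose proof (ibpP m om t c n n) as H1.
  pose proof (Int_sub _ _ _ _ _ _ _
    (Int_plus _ _ _ _ _ _ _ (O1 m om t c h HO n n (le_n n))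
       (Int_ext _ _ _ (fun x => psum (da (cc c n)) n x * Pmon c n x) _ _ (fun x => Rmult_comm _ _) (O1 m om t c h HO n n (le_n n))))
    (Int_scal _ _ _ _ 2 _ HA)) as H2.
  assert (H3 : Int m om t (fun x => (psum (da (cc c n)) n x * Pmon c n x + Pmon c n x * psum (da (cc c n)) n x)
                        - 2 * x * (Pmon c n x * Pmon c n x)) (0 + 0 - 2 * A))
    by (eapply Int_ext; [|exact H2]; intros x; cbv beta; ring).
  assert (E := Int_unique _ _ _ _ _ _ H1 H3).
  lra.
Qed.

Lemma betaS m om t c h (HO : HOrth m om t c h) p :
  sum1 (fun k => om k * ((Pmon c p (t k) * Pmon c (S p) (t k)) * exp (- (t k)^2))) m
  = 2 * h (S p) - INR (S p) * h p.
Proof.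
  destruct (XP m om t c h HO p (S p)) as [v [Hv [_ Hv2]]].
  rewrite Hv2 in Hv by reflexivity.
  pose proof (ibpP m om t c p (S p)) as H1.
  pose proof (Int_sub _ _ _ _ _ _ _
    (Int_plus _ _ _ _ _ _ _ (O1 m om t c h HO p (S p) ltac:(lia))
       (Int_ext _ _ _ (fun x => psum (da (cc c (S p))) (S p) x * Pmon c p x) _ _ (fun x => Rmult_comm _ _) (O2 m om t c h HO p)))
    (Int_scal _ _ _ _ 2 _ Hv)) as H2.
  assert (H3 : Int m om t (fun x => (psum (da (cc c p)) p x * Pmon c (S p) x + Pmon c p x * psum (da (cc c (S p))) (S p) x)
                        - 2 * x * (Pmon c p x * Pmon c (S p) x)) (0 + INR (S p) * h p - 2 * h (S p)))
    by (eapply Int_ext; [|exact H2]; intros x; cbv beta; ring).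
  assert (E := Int_unique _ _ _ _ _ _ H1 H3).
  lra.
Qed.

Lemma sum1_div f d M : sum1 (fun k => f k / d) M = sum1 f M / d.
Proof. induction M; simpl; [unfold Rdiv; ring|]. rewrite IHM. unfold Rdiv; ring. Qed.
Lemma sum1_ext f g M : (forall k, f k = g k) -> sum1 f M = sum1 g M.
Proof. intros H; induction M; simpl; [reflexivity|]. rewrite IHM, H. reflexivity. Qed.

Lemma alg2 X n1 p1 hn hp : hp <> 0 -> hn <> 0 ->
  (2 * hn / hp) * (X * p1 ^ 2 / hp) <> 0 ->
  X * n1 ^ 2 / hn = 2 * (X * n1 * p1 / hp) ^ 2 / ((2 * hn / hp) * (X * p1 ^ 2 / hp)).
Proof.
  intros Hp Hn H.
  assert (HX : X <> 0) by (intro Z; apply H; rewrite Z; unfold Rdiv; ring).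
  assert (Hp1 : p1 <> 0) by (intro Z; apply H; rewrite Z; unfold Rdiv; ring).
  field. repeat split; assumption.
Qed.

Lemma alg3 X1 Xk n1 p1 nk pk hn hp : hp <> 0 -> hn <> 0 ->
  (X1 * n1 * p1 / hp) ^ 2 * (Xk * pk ^ 2 / hp) <> 0 ->
  Xk * nk ^ 2 / hn =
  (Xk * nk * pk / hp) ^ 2 * (X1 * p1 ^ 2 / hp) / ((X1 * n1 * p1 / hp) ^ 2 * (Xk * pk ^ 2 / hp))
  * (X1 * n1 ^ 2 / hn).
Proof.
  intros Hp Hn H.
  assert (H1 : X1 <> 0) by (intro Z; apply H; rewrite Z; unfold Rdiv; ring).
  assert (H2 : Xk <> 0) by (intro Z; apply H; rewrite Z; unfold Rdiv; ring).
  assert (H3 : n1 <> 0) by (intro Z; apply H; rewrite Z; unfold Rdiv; ring).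
  assert (H4 : p1 <> 0) by (intro Z; apply H; rewrite Z; unfold Rdiv; ring).
  assert (H5 : pk <> 0) by (intro Z; apply H; rewrite Z; unfold Rdiv; ring).
  field. repeat split; assumption.
Qed.

Theorem lemma2p7
  (m : nat) (t om : nat -> R) (c : nat -> nat -> R) (h : nat -> R)
  (Hm : (1 <= m)%nat)
  (Ht : forall k : nat, (1 <= k)%nat -> (k < m)%nat -> t k < t (S k))
  (Hom : forall l : nat, (l <= m)%nat -> 0 <= sum0 om l)
  (Hw : exists x : R, weight m om t x <> 0)
  (Hh : forall n : nat, 0 < h n)
  (Horth : forall j k : nat,
     is_RInt_gen (fun x => Pmon c j x * Pmon c k x * weight m om t x)
       (Rbar_locally m_infty) (Rbar_locally p_infty)
       (if Nat.eqb j k then h k else 0)) :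
  (forall n k : nat, (1 <= k)%nat -> (k <= m)%nat ->
     rnk om t c h (S n) k =
       - rnk om t c h n k
       + (t k - / 2 * sum1 (fun j => Rnk om t c h n j) m) * Rnk om t c h n k)
  /\
  (forall n : nat, (1 <= n)%nat ->
     (sum1 (fun k => rnk om t c h n k) m + INR n) * Rnk om t c h (n - 1) 1 <> 0 ->
     Rnk om t c h n 1 =
       2 * (rnk om t c h n 1) ^ 2
       / ((sum1 (fun k => rnk om t c h n k) m + INR n) * Rnk om t c h (n - 1) 1))
  /\
  (forall n k : nat, (1 <= n)%nat -> (2 <= k)%nat -> (k <= m)%nat ->
     (rnk om t c h n 1) ^ 2 * Rnk om t c h (n - 1) k <> 0 ->
     Rnk om t c h n k =
       (rnk om t c h n k) ^ 2 * Rnk om t c h (n - 1) 1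
       / ((rnk om t c h n 1) ^ 2 * Rnk om t c h (n - 1) k)
       * Rnk om t c h n 1)
  /\
  (forall k : nat, (1 <= k)%nat -> (k <= m)%nat ->
     Rnk om t c h 0 k =
       om k * exp (- (t k) ^ 2)
       / RInt_gen (weight m om t) (Rbar_locally m_infty) (Rbar_locally p_infty))
  /\
  (forall k : nat, rnk om t c h 0 k = 0).
Proof.
  assert (HO : HOrth m om t c h) by exact Horth.
  assert (Hh0 : forall n, h n <> 0) by (intros n; specialize (Hh n); lra).
  split; [|split; [|split; [|split]]].
  - intros n k _ _.
    destruct (alpha m om t c h HO n) as [A [HA EA]].
    assert (Eal : / 2 * sum1 (fun j => Rnk om t c h n j) m = A / h n).
    { rewrite (sum1_ext _ (fun k => om k * ((Pmon c n (t k) * Pmon c n (t k)) * exp (- (t k)^2)) / h n)).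
      rewrite sum1_div, <- EA. field. apply Hh0.
      intros j. unfold Rnk. field. apply Hh0. }
    rewrite Eal. destruct n.
    + unfold rnk, Rnk. rewrite (rec0 m om t c h HO Hh A HA (t k)). field. apply Hh0.
    + unfold rnk, Rnk. rewrite (recS m om t c h HO Hh n A HA (t k)). field. split; apply Hh0.
  - intros n Hn. destruct n as [|p]; [lia|]. replace (S p - 1)%nat with p by lia.
    assert (Es : sum1 (fun k => rnk om t c h (S p) k) m + INR (S p) = 2 * h (S p) / h p).
    { rewrite (sum1_ext _ (fun k => om k * ((Pmon c p (t k) * Pmon c (S p) (t k)) * exp (- (t k)^2)) / h p)).
      rewrite sum1_div, (betaS m om t c h HO p). field. apply Hh0.
      intros j. unfold rnk. field. apply Hh0. }
    rewrite Es. intros H. unfold rnk, Rnk in *.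
    rewrite (Rmult_comm (om 1%nat) (exp _)) in *.
    replace (exp (- t 1%nat ^ 2) * om 1%nat * Pmon c (S p) (t 1%nat) * Pmon c p (t 1%nat) / h p)
      with ((exp (- t 1%nat ^ 2) * om 1%nat) * Pmon c (S p) (t 1%nat) * Pmon c p (t 1%nat) / h p) by reflexivity.
    apply alg2; auto.
  - intros n k Hn _ _. destruct n as [|p]; [lia|]. replace (S p - 1)%nat with p by lia.
    unfold rnk, Rnk. intros H. apply alg3; auto.
  - intros k _ _.
    assert (E : RInt_gen (weight m om t) (Rbar_locally m_infty) (Rbar_locally p_infty) = h 0%nat).
    { apply (is_RInt_gen_unique (V:=R_CompleteNormedModule)).
      eapply RIg_ext; [|exact (Horth 0%nat 0%nat)]. intros x. unfold Pmon. simpl. ring. }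
    rewrite E. unfold Rnk, Pmon. simpl. field. apply Hh0.
  - intros k. reflexivity.
Qed.
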